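(* There exists an absolute constant $C>0$ and, for each $q\in[2,\infty)$, a constant $c_q>0$ such that the following holds. Let $N,n,m\in\mathbb N$, let $w_1,\dots,w_N\ge 0$ be weights with $\sum_{i=1}^N w_i>0$, and let $\{1,\dots,N\}=\bigsqcup_{s=1}^m\Delta_s$ be a partition into $m$ blocks with $N_s=|\Delta_s|$. Assume: 1) $\max_{1\le i\le N}w_i\le (4n)^{-1}\sum_{i=1}^N w_i$; 2) for every $s=1,\dots,m$, $\nu_s:=\dfrac{\sum_{i\in\Delta_s}w_i}{\sum_{i=1}^N w_i}\ge \dfrac{C\log(2m)}{n}$. Let $q\in[2,\infty)$, $h>0$, and let $X=(\mathbb R^N,\|\cdot\|_X)$ be a normed space with $\|x\|_X\ge\max(\|x\|_{\ell^N_{q,w}},\,h\|x\|_\infty)$ for all $x\in\mathbb R^N$. Then $$d_n\Big(\prod_{s=1}^m B_1^{N_s},X\Big)\ge\min\Big(c_q\,\big(n\max_{1\le s\le m}\nu_s\big)^{-1/2}\Big(\sum_{i=1}^N w_i\Big)^{1/q},\ h/2\Big).$$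
   Context: The weighted norm is $\|x\|_{\ell^N_{q,w}}=\left(\sum_{i=1}^N w_i|x_i|^q\right)^{1/q}$ and $\|x\|_\infty=\max_i|x_i|$. The product of octahedra is $\prod_{s=1}^m B_1^{N_s}=\{x\in\mathbb R^N:\sum_{i\in\Delta_s}|x_i|\le 1\ \text{for } s=1,\dots,m\}$. For a normed space $X$ and $K\subset X$, the Kolmogorov $n$-width is $d_n(K,X)=\inf_{Q_n}\sup_{x\in K}\inf_{y\in Q_n}\|x-y\|_X$, the infimum over linear subspaces $Q_n\subset X$ with $\dim Q_n\le n$. *)

(* Defs.v *)
From HB Require Import structures.
From mathcomp Require Import all_boot all_order all_algebra.
From mathcomp Require Import all_classical all_reals all_analysis.
Set Implicit Arguments. Unset Strict Implicit. Unset Printing Implicit Defensive.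
Import Order.TTheory GRing.Theory Num.Theory.
Local Open Scope classical_set_scope.
Local Open Scope ring_scope.

Definition is_norm (R : realType) (N : nat) (nX : 'rV[R]_N -> R) : Prop :=
  [/\ forall x y, nX (x + y) <= nX x + nX y,
      forall (a : R) x, nX (a *: x) = `|a| * nX x
    & forall x, nX x = 0 -> x = 0].

Definition lqw_norm (R : realType) (N : nat) (q : R) (w : 'I_N -> R)
    (x : 'rV[R]_N) : R :=
  (\sum_(i < N) w i * (`|x 0 i| `^ q)) `^ (1 / q).

Definition linf_norm (R : realType) (N : nat) (x : 'rV[R]_N) : R :=
  \big[Num.max/0]_(i < N) `|x 0 i|.

(* product of octahedra: the blocks are Delta_s = {i | blk i = s} *)
Definition prod_octahedra (R : realType) (N m : nat) (blk : 'I_N -> 'I_m)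
  : set 'rV[R]_N :=
  [set x | forall s : 'I_m, \sum_(i < N | blk i == s) `|x 0 i| <= 1].

Definition kolmogorov_width (R : realType) (N : nat) (nX : 'rV[R]_N -> R)
    (K : set 'rV[R]_N) (n : nat) : \bar R :=
  ereal_inf [set ereal_sup [set ereal_inf [set (nX (x - y))%:E | y in
                  [set y | y \in Q]] | x in K]
            | Q in [set Q : {vspace 'rV[R]_N} | (\dim Q <= n)%N]].

(* Main.v *)
Require Import Defs.
From HB Require Import structures.
From mathcomp Require Import all_boot all_order all_algebra.
From mathcomp Require Import all_classical all_reals all_analysis.
From mathcomp Require Import ring lra.
Import Order.TTheory GRing.Theory Num.Theory.
Local Open Scope classical_set_scope.
Local Open Scope ring_scope.

Lemma proj_exists (R : realFieldType) d N (A0 : 'M[R]_(d,N)) :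
  exists P : 'M[R]_N, P^T = P /\ P *m P = P /\ \tr P <= d%:R /\
    forall c : 'rV_d, c *m A0 *m P = c *m A0.
Proof.
pose B := row_base A0.
have Bf : row_free B := row_base_free A0.
have HB : (A0 <= B)%MS by rewrite eq_row_base.
clearbody B.
set G := B *m B^T.
have Gu : G \in unitmx.
  rewrite -row_free_unit; apply: inj_row_free => v Hv.
  have : (v *m B) *m (v *m B)^T = 0.
    by rewrite trmx_mul mulmxA -(mulmxA v) Hv mul0mx.
  move=> H0.
  have vB0 : v *m B = 0.
    move: H0; set u := v *m B => H0.
    move/matrixP/(_ 0 0): H0; rewrite !mxE => Hs.
    have : \sum_(k < _) u 0 k ^+ 2 = 0.
      rewrite -[RHS]Hs; apply: eq_bigr => k _. by rewrite !mxE expr2.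
    move/eqP; rewrite psumr_eq0; last by move=> k _; exact: sqr_ge0.
    move/allP => Hall; apply/rowP => j; rewrite [RHS]mxE.
    by have := Hall j (mem_index_enum _); rewrite /= sqrf_eq0 => /eqP.
  by apply/eqP; rewrite -(mulmx_free_eq0 _ Bf) vB0.
exists (B^T *m invmx G *m B); split; [|split; [|split]].
- by rewrite !trmx_mul trmxK trmx_inv /G trmx_mul trmxK mulmxA.
- rewrite -!mulmxA (mulmxA B) (mulmxA (B *m B^T)) -/G mulmxV // mul1mx.
  done.
- rewrite mxtrace_mulC mulmxA -/G mulmxV // mxtrace1.
  by rewrite ler_nat rank_leq_row.
- move=> c.
  have : (c *m A0 <= B)%MS by exact: (submx_trans (submxMl c A0) HB).
  case/submxP => c' ->.
  by rewrite -!mulmxA (mulmxA B) (mulmxA (B *m B^T)) -/G mulmxV // mul1mx.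
Qed.


Lemma sign_choice (R : realFieldType) m (M : 'I_m -> 'I_m -> R) :
  exists e : 'I_m -> R, (forall s, e s = 1 \/ e s = -1) /\
    \sum_s \sum_t e s * e t * M s t <= \sum_s M s s.
Proof.
elim: m M => [|m IH] M.
  by exists (fun _ => 1); split; [left | rewrite !big_ord0].
have [e' [He' Hsum]] := IH (fun s t => M (lift ord0 s) (lift ord0 t)).
set c := \sum_t e' t * (M ord0 (lift ord0 t) + M (lift ord0 t) ord0).
pose sg : R := if c <= 0 then 1 else -1.
have sgc : sg * c <= 0.
  rewrite /sg; case: ifP => H; first by rewrite mul1r.
  by rewrite mulN1r oppr_le0; apply: ltW; rewrite ltNge H.
have sg2 : sg * sg = 1 by rewrite /sg; case: ifP => _; rewrite ?mulrNN mulr1.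
exists (fun i => if unlift ord0 i is Some j then e' j else sg); split.
  by move=> s; case: (unlift ord0 s) => [j|]; [exact: He' | rewrite /sg; case: ifP; [left|right]].
have -> : \sum_s M s s = M ord0 ord0 + \sum_(s < m) M (lift ord0 s) (lift ord0 s).
  by rewrite big_ord_recl.
rewrite big_ord_recl unlift_none big_ord_recl unlift_none.
under eq_bigr => t _ do rewrite liftK.
under [X in (_ + X <= _)%R]eq_bigr => s _ do rewrite big_ord_recl unlift_none liftK.
under [X in (_ + X <= _)%R]eq_bigr => s _ do under eq_bigr => t _ do rewrite liftK.
rewrite big_split /= sg2 mul1r -!addrA lerD2l addrA.
rewrite -[X in (_ <= X)%R]add0r lerD //.
apply: le_trans sgc; rewrite /c mulr_sumr -big_split /=.
by rewrite le_eqVlt; apply/orP; left; apply/eqP; apply: eq_bigr => t _; ring.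
Qed.


Lemma young_aux (R : realType) (p u : R) : 1 <= p -> 0 <= u ->
  u <= u `^ p / p + (1 - p^-1).
Proof.
move=> p1 u0; have [->|pn1] := eqVneq p 1.
  by rewrite powRr1 // invr1 mulr1 subrr addr0.
have p1' : 1 < p by rewrite lt_neqAle eq_sym pn1 p1.
have p0 : 0 < p by apply: lt_trans p1'.
have pm0 : 0 < p - 1 by rewrite subr_gt0.
have := @conjugate_powR R u 1 p (p / (p - 1)) u0 ler01 p0 (divr_gt0 p0 pm0).
rewrite powR1 mulr1 => H.
have -> : 1 - p^-1 = 1 / (p / (p - 1)).
  by field; rewrite ?gt_eqF.
apply: H; field; rewrite ?gt_eqF //.
Qed.

Lemma pm_ineq (R : realType) (N : nat) (q a : R) (w d : 'I_N -> R) :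
  2 <= q -> 0 < a -> (forall i, 0 <= w i) ->
  \sum_(i < N) w i * `|d i| `^ q < a `^ q * \sum_(i < N) w i ->
  \sum_(i < N) w i * (d i) ^+ 2 < a ^+ 2 * \sum_(i < N) w i.
Proof.
move=> q2 a0 w0 H.
set W := \sum_(i < N) w i in H *.
pose p := q / 2.
have p1 : 1 <= p by rewrite /p ler_pdivlMr // mul1r.
have p0 : 0 < p by apply: lt_le_trans p1.
pose v i := `|d i| / a.
have v0 i : 0 <= v i by rewrite /v divr_ge0 // ltW.
have Hd i : `|d i| `^ q = a `^ q * v i `^ q.
  rewrite -powRM; [|exact: ltW|exact: v0]. by rewrite /v mulrC divfK ?gt_eqF.
have Hu i : (v i ^+ 2) `^ p = v i `^ q.
  rewrite -powR_mulrn; last exact: v0. by rewrite -powRrM /p; congr (_ `^ _); field.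
have Hd2 i : d i ^+ 2 = a ^+ 2 * v i ^+ 2.
  by rewrite /v -exprMn mulrC divfK ?gt_eqF // real_normK ?num_real.
have aq0 : 0 < a `^ q by apply: powR_gt0.
have Hv : \sum_(i < N) w i * v i `^ q < W.
  move: H; under eq_bigr => i _ do rewrite Hd mulrCA.
  by rewrite -mulr_sumr ltr_pM2l.
have Hsum : \sum_(i < N) w i * v i ^+ 2 <=
    p^-1 * \sum_(i < N) w i * v i `^ q + (1 - p^-1) * W.
  rewrite /W mulr_sumr mulr_sumr -big_split /=; apply: ler_sum => i _.
  have := @young_aux R p _ p1 (sqr_ge0 (v i)); rewrite Hu => Hy.
  have := ler_wpM2l (w0 i) Hy; rewrite mulrDr; lra.
under eq_bigr => i _ do rewrite Hd2 mulrCA.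
rewrite -mulr_sumr ltr_pM2l ?exprn_gt0 //.
apply: (le_lt_trans Hsum).
have pi0 : 0 < p^-1 by rewrite invr_gt0.
have : p^-1 * \sum_(i < N) w i * v i `^ q < p^-1 * W by rewrite ltr_pM2l.
lra.
Qed.


Lemma linf_ge (R : realType) N (x : 'rV[R]_N) j : `|x 0 j| <= linf_norm x.
Proof. rewrite /linf_norm; exact: (le_bigmax _ (fun j => `|x 0 j|) j). Qed.

Lemma avg_min (R : realFieldType) (I : finType) (P : pred I) (om phi : I -> R) :
  (forall j, 0 <= om j) -> 0 < \sum_(j | P j) om j ->
  exists j, [/\ P j, 0 < om j &
     (\sum_(j | P j) om j) * phi j <= \sum_(j | P j) om j * phi j].
Proof.
move=> om0 S0.
set S := \sum_(j | P j) om j in S0 *; set X := \sum_(j | P j) om j * phi j.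
have [//|H] := pselect (exists j, [/\ P j, 0 < om j & S * phi j <= X]).
have H' : forall j, P j -> 0 < om j -> X < S * phi j.
  move=> j Pj oj; rewrite ltNge; apply/negP => Hle; by apply: H; exists j; split.
have [j0 [Pj0 oj0]] : exists j, P j /\ 0 < om j.
  have [//|H2] := pselect (exists j, P j /\ 0 < om j).
  exfalso; move: S0; rewrite /S big1 ?ltxx // => j Pj.
  apply/eqP; rewrite eq_le om0 andbT leNgt; apply/negP => oj; by apply: H2; exists j; split.
have D0 : forall j, P j -> 0 <= om j * (S * phi j - X).
  move=> j Pj; have := om0 j; rewrite le_eqVlt => /orP[/eqP <-|oj]; first by rewrite mul0r.
  by apply: mulr_ge0; [exact: ltW | rewrite subr_ge0 ltW // H'].
have : \sum_(j | P j) om j * (S * phi j - X) = 0.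
  under eq_bigr => j _ do rewrite mulrBr mulrCA.
  by rewrite sumrB -mulr_sumr -/X -mulr_suml -/S mulrC subrr.
rewrite (bigD1 j0) //= => HH.
have : 0 < om j0 * (S * phi j0 - X) by rewrite mulr_gt0 // subr_gt0 H'.
have : 0 <= \sum_(j | P j && (j != j0)) om j * (S * phi j - X).
  by apply: sumr_ge0 => j /andP[Pj _]; exact: D0.
lra.
Qed.

Lemma sum_sel (R : realType) N m (blk : 'I_N -> 'I_m) (i : 'I_m -> 'I_N)
  (Hi : forall s, blk (i s) = s) (F : 'I_N -> R) :
  \sum_(j < N) (if j == i (blk j) then F j else 0) = \sum_(s < m) F (i s).
Proof.
rewrite (partition_big blk xpredT) //=; apply: eq_bigr => s _.
rewrite (bigD1 (i s)) /= ?Hi ?eqxx // big1 ?addr0 // => j /andP[Hj Hne].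
by rewrite (eqP Hj) (negPf Hne).
Qed.

Lemma vspace_mx (R : realType) N (Q : {vspace 'rV[R]_N}) :
  exists Bq : 'M[R]_(\dim Q, N), forall y, y \in Q -> exists c : 'rV_(\dim Q), y = c *m Bq.
Proof.
exists (\matrix_(k, j) (vbasis Q)`_k 0 j) => y Hy.
exists (\row_k coord (vbasis Q) k y).
rewrite {1}(coord_vbasis Hy) mulmx_sum_row; apply: eq_bigr => k _.
rewrite mxE; congr (_ *: _); apply/rowP => j; rewrite !mxE //.
Qed.


Definition dotv {R : realType} {N} (u v : 'rV[R]_N) := \sum_(j < N) u 0 j * v 0 j.

Lemma dotP (R : realType) N (P : 'M[R]_N) (u v : 'rV[R]_N) : P^T = P ->
  dotv (u *m P) v = dotv u (v *m P).
Proof.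
move=> PT; rewrite /dotv.
under eq_bigr => j _ do rewrite mxE mulr_suml.
rewrite exchange_big /=; apply: eq_bigr => k _.
rewrite [in RHS]mxE mulr_sumr; apply: eq_bigr => j _.
have -> : P j k = P k j by rewrite -{1}PT mxE.
ring.
Qed.

Lemma amgm (R : realType) (l u v : R) : 0 < l ->
  - (u * v) <= u ^+ 2 / (2 * l) + l / 2 * v ^+ 2.
Proof.
move=> l0; rewrite -subr_ge0.
have -> : u ^+ 2 / (2 * l) + l / 2 * v ^+ 2 - - (u * v) = (u + l * v) ^+ 2 / (2 * l).
  by field; rewrite gt_eqF.
by rewrite divr_ge0 ?sqr_ge0 // mulr_ge0 // ltW.
Qed.

Lemma sum_sel2 (R : realType) N m (blk : 'I_N -> 'I_m) (i : 'I_m -> 'I_N)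
  (Hi : forall s, blk (i s) = s) (u G : 'I_N -> R) :
  \sum_(j < N) u j * (if j == i (blk j) then G j else 0) = \sum_(s < m) u (i s) * G (i s).
Proof.
rewrite -(@sum_sel R N m blk i Hi (fun j => u j * G j)); apply: eq_bigr => j _.
by case: ifP => _; rewrite ?mulr0.
Qed.

Lemma dotvB (R : realType) N (u v z : 'rV[R]_N) : dotv (u - v) z = dotv u z - dotv v z.
Proof.
rewrite /dotv -sumrB; apply: eq_bigr => j _; by rewrite !mxE mulrBl.
Qed.

Lemma core (R : realType) (N n m : nat) (w : 'I_N -> R) (blk : 'I_N -> 'I_m)
  (Q : {vspace 'rV[R]_N}) (q h : R) (nX : 'rV[R]_N -> R) :
  (0 < n)%N -> (forall i, 0 <= w i) -> 0 < \sum_(i < N) w i ->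
  (forall i, w i <= (4 * n%:R)^-1 * \sum_(j < N) w j) ->
  (forall s : 'I_m, 0 < \sum_(i < N | blk i == s) w i) ->
  2 <= q -> 0 < h ->
  (forall x, Num.max (lqw_norm q w x) (h * linf_norm x) <= nX x) ->
  (\dim Q <= n)%N ->
  exists2 x, prod_octahedra blk x & forall y, y \in Q ->
    Num.min (8^-1 * (n%:R * \big[Num.max/0]_(s < m)
                   ((\sum_(i < N | blk i == s) w i) / (\sum_(i < N) w i)))
                `^ (- (1 / 2))
              * (\sum_(i < N) w i) `^ (1 / q)) (h / 2) <= nX (x - y).
Proof.
move=> n0 w0 W0 hyp1 Ws q2 h0 HX HQ.
set W := \sum_(i < N) w i in W0 hyp1 *.
set Wb := fun s : 'I_m => \sum_(i < N | blk i == s) w i.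
have WbE s : \sum_(i < N | blk i == s) w i = Wb s by [].
set nu := fun s : 'I_m => Wb s / W.
have nuE s : Wb s / W = nu s by [].
under eq_bigr => s _ do rewrite WbE nuE.
set nus := \big[Num.max/0]_(s < m) nu s.
have [j0 _] : exists j0 : 'I_N, True.
  have [//|H] := pselect (exists j0 : 'I_N, True).
  exfalso; move: W0; rewrite /W big1 ?ltxx // => j _.
  by exfalso; apply: H; exists j.
have nu0 s : 0 < nu s by exact: divr_gt0 (Ws s) W0.
have nule s : nu s <= nus by rewrite /nus; exact: (le_bigmax _ nu s).
have nus0 : 0 < nus by apply: lt_le_trans (nule (blk j0)).
have HW : W = \sum_s Wb s by rewrite /W (partition_big blk xpredT).
have sumnu : \sum_s nu s = 1.
  by rewrite /nu -mulr_suml -HW divff // gt_eqF.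
have nr0 : 0 < n%:R :> R by rewrite ltr0n.
set Z := n%:R * nus.
have Z0 : 0 < Z by rewrite mulr_gt0.
set a := 8^-1 * Z `^ (- (1 / 2)).
have a0 : 0 < a by rewrite mulr_gt0 ?invr_gt0 ?ltr0n // powR_gt0.
have a2 : a ^+ 2 = 64^-1 / Z.
  rewrite /a exprMn -[Z `^ _ ^+ 2]powR_mulrn ?powR_ge0 // -powRrM.
  have -> : - (1 / 2) * 2%:R = -1 :> R by field.
  by rewrite powR_inv1 ?ltW //; congr (_ / _); field.
have [Bq HBq] := @vspace_mx R N Q.
pose Dh : 'M[R]_N := diag_mx (\row_j Num.sqrt (w j)).
have [P [PT [PP [trP HP]]]] := @proj_exists R _ _ (Bq *m Dh).
have HPy y : y \in Q -> y *m Dh *m P = y *m Dh.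
  by move=> Hy; have [c ->] := HBq y Hy; rewrite -(mulmxA c Bq Dh) HP.
have Psym j k : P j k = P k j by rewrite -{1}PT mxE.
have Pd j : P j j = \sum_k P j k ^+ 2.
  rewrite -{1}PP mxE; apply: eq_bigr => k _; by rewrite (Psym k j) expr2.
have Pd0 j : 0 <= P j j by rewrite Pd sumr_ge0 // => k _; exact: sqr_ge0.
have trP' : \sum_j P j j <= n%:R.
  by apply: le_trans trP _; rewrite ler_nat.
have sw2 j : Num.sqrt (w j) * Num.sqrt (w j) = w j by rewrite -expr2 sqr_sqrtr.
have sw0 j : 0 < w j -> 0 < Num.sqrt (w j) by move=> ?; rewrite sqrtr_gt0.
set lam := W / (8 * Z).
have lam0 : 0 < lam by rewrite divr_gt0 // mulr_gt0.
pose phi := fun s j => nu s * P j j + lam / 2 * nu s ^+ 2 * P j j / w j.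
have Hch : forall s, exists j, [/\ blk j == s, 0 < w j &
    Wb s * phi s j <= \sum_(j | blk j == s) w j * phi s j].
  move=> s; exact: (@avg_min R _ (fun j => blk j == s) w (phi s) w0 (Ws s)).
case: (choice Hch) => i Hi.
have Hblk s : blk (i s) = s by case: (Hi s) => /eqP.
have wi0 s : 0 < w (i s) by case: (Hi s).
pose sq j := Num.sqrt (w j).
pose M := fun s t : 'I_m => sq (i s) * P (i t) (i s) * nu t / sq (i t)
   + lam / 2 * (nu s * nu t * P (i t) (i s) / (sq (i s) * sq (i t))).
have [e [He Hsign]] := @sign_choice R m M.
have e2 s : e s * e s = 1 by case: (He s) => ->; rewrite ?mulrNN mulr1.
have en s : `|e s| = 1 by case: (He s) => ->; rewrite ?normrN normr1.
pose x : 'rV[R]_N := \row_j (if j == i (blk j) then e (blk j) else 0).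
have xi s : x 0 (i s) = e s by rewrite mxE Hblk eqxx.
exists x.
  rewrite /prod_octahedra /= => s.
  rewrite (bigD1 (i s)) /= ?Hblk // big1 => [|j /andP [Hj Hne]].
    by rewrite xi en addr0.
  by rewrite mxE (eqP Hj) (negPf Hne) normr0.
move=> y Hy; rewrite leNgt; apply/negP => Hlt.
set dd := x - y.
move: Hlt; rewrite lt_min => /andP [HT Hh].
have := HX dd; rewrite ge_max => /andP [Hq Hinf].
have F1 j : `|dd 0 j| < 2^-1.
  have H1 := le_lt_trans (le_trans (ler_wpM2l (ltW h0) (@linf_ge R N dd j)) Hinf) Hh.
  by rewrite -(ltr_pM2l h0).
have q0 : 0 < q by apply: lt_le_trans q2.
set A := \sum_(i < N) w i * `|dd 0 i| `^ q.
have A0 : 0 <= A by apply: sumr_ge0 => j _; rewrite mulr_ge0 ?powR_ge0.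
have F2 : A < a `^ q * W.
  have H1 : A `^ (1 / q) < a * W `^ (1 / q) := le_lt_trans Hq HT.
  have := @gt0_ltr_powR R q q0 _ _ _ _ H1.
  rewrite -powRrM mul1r mulVf ?gt_eqF // powRr1 //.
  rewrite powRM ?ltW ?powR_ge0 //; last exact: powR_gt0. rewrite -(@powRrM R W) mulVf ?gt_eqF // powRr1 ?ltW //.
  by apply; rewrite nnegrE ?powR_ge0 // mulr_ge0 ?powR_ge0 ?ltW.
have F3 := @pm_ineq R N q a w (fun i => dd 0 i) q2 a0 w0 F2.
have ddE j : dd 0 j = x 0 j - y 0 j by rewrite !mxE.
have E1 : 2^-1 < \sum_t nu t * (e t * y 0 (i t)).
  have -> : 2^-1 = \sum_t nu t * 2^-1 :> R by rewrite -mulr_suml sumnu mul1r.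
  apply: ltr_sum.
    by apply/hasP; exists (blk j0); rewrite ?mem_index_enum.
  move=> t _; rewrite ltr_pM2l //.
  have -> : e t * y 0 (i t) = 1 - e t * dd 0 (i t).
    by rewrite ddE xi mulrBr e2 opprB addrC subrK.
  have : e t * dd 0 (i t) <= `|dd 0 (i t)|.
    by apply: le_trans (ler_norm _) _; rewrite normrM en mul1r.
  have := F1 (i t); lra.
have sq0 t : 0 < sq (i t) by apply: sw0.
have sqn t : sq (i t) != 0 by rewrite gt_eqF.
have Dhe (u : 'rV[R]_N) j : (u *m Dh) 0 j = u 0 j * sq j.
  by rewrite mul_mx_diag !mxE.
pose g : 'rV[R]_N := \row_j (if j == i (blk j) then e (blk j) * nu (blk j) / sq j else 0).
pose hv := g *m P.
have hvE k : hv 0 k = \sum_t P (i t) k * (e t * nu t / sq (i t)).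
  rewrite /hv mxE.
  under eq_bigr => j _ do rewrite mxE mulrC.
  rewrite (@sum_sel2 R N m blk i Hblk (fun j => P j k)).
  by apply: eq_bigr => t _; rewrite Hblk.
have S1 : \sum_t nu t * (e t * y 0 (i t)) = dotv (y *m Dh) g.
  rewrite /dotv.
  under [RHS]eq_bigr => j _ do rewrite Dhe mxE.
  rewrite (@sum_sel2 R N m blk i Hblk (fun j => y 0 j * sq j)).
  apply: eq_bigr => t _; rewrite Hblk; field; exact: sqn.
have S2 : dotv (y *m Dh) g = dotv (x *m Dh) hv - dotv (dd *m Dh) hv.
  rewrite -dotvB -HPy // dotP //.
  by congr dotv; rewrite /dd mulmxBl opprB addrC subrK.
have E3 : \sum_s \sum_t e s * e t * M s t =
    dotv (x *m Dh) hv + lam / 2 * dotv g hv.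
  rewrite /dotv.
  under [X in _ = X + _]eq_bigr => j _ do rewrite Dhe mxE -mulrA mulrC.
  under [X in _ = _ + _ * X]eq_bigr => j _ do rewrite mxE mulrC.
  rewrite (@sum_sel2 R N m blk i Hblk (fun j => sq j * hv 0 j)).
  rewrite (@sum_sel2 R N m blk i Hblk (fun j => hv 0 j)).
  rewrite mulr_sumr -big_split /=; apply: eq_bigr => s _.
  rewrite !hvE Hblk mulr_sumr !mulr_suml mulr_sumr -big_split /=.
  apply: eq_bigr => t _; rewrite /M; field.
  by rewrite !sqn.
have Mss s : M s s = phi s (i s).
  rewrite /M /phi -[w (i s)]sw2 -/(sq (i s)); field; exact: sqn.
have E6 : dotv (x *m Dh) hv + lam / 2 * dotv g hv <= \sum_s phi s (i s).
  by rewrite -E3; under [X in (_ <= X)%R]eq_bigr => s _ do rewrite -Mss.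
have E5 : dotv hv hv = dotv g hv by rewrite /hv dotP // -mulmxA PP.
have E4 : - dotv (dd *m Dh) hv <=
    (\sum_j w j * dd 0 j ^+ 2) / (2 * lam) + lam / 2 * dotv hv hv.
  rewrite /dotv -sumrN mulr_suml mulr_sumr -big_split /=; apply: ler_sum => j _.
  rewrite Dhe.
  have -> : w j * dd 0 j ^+ 2 = (dd 0 j * sq j) ^+ 2.
    by rewrite exprMn /sq sqr_sqrtr // mulrC.
  rewrite -expr2; exact: amgm.
pose psi j := w j * P j j / W + lam / 2 * (nus / W) * P j j.
have psi0 j : 0 <= psi j.
  rewrite /psi; apply: addr_ge0; first by rewrite divr_ge0 ?mulr_ge0 // ltW.
  apply: mulr_ge0 => //; apply: mulr_ge0; apply: divr_ge0 => //; exact: ltW.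
have Hs s : phi s (i s) <= \sum_(j | blk j == s) psi j.
  case: (Hi s) => _ _ H.
  have nuW : Wb s = nu s * W by rewrite /nu divfK ?gt_eqF.
  have : Wb s * phi s (i s) <= Wb s * \sum_(j | blk j == s) psi j.
    apply: le_trans H _; rewrite mulr_sumr; apply: ler_sum => j /eqP Hj.
    have [->|wn0] := eqVneq (w j) 0.
      by rewrite mul0r; exact: mulr_ge0 (ltW (Ws s)) (psi0 j).
    have L : w j * phi s j = w j * nu s * P j j + lam / 2 * (nu s * (nu s * P j j)).
      by rewrite /phi; field.
    have Rr : Wb s * psi j = w j * nu s * P j j + lam / 2 * (nu s * (nus * P j j)).
      by rewrite /psi nuW; field; rewrite gt_eqF.
    rewrite L Rr lerD2l; apply: ler_wpM2l; first by rewrite divr_ge0 // ltW.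
    apply: ler_wpM2l; first exact: ltW. exact: ler_wpM2r.
  by rewrite ler_pM2l // Ws.
have E7 : \sum_s phi s (i s) <= 4^-1 + lam / 2 * Z / W.
  apply: le_trans (ler_sum _ (fun s _ => Hs s)) _.
  have -> : \sum_s \sum_(j | blk j == s) psi j = \sum_j psi j.
    by rewrite [RHS](partition_big blk xpredT).
  rewrite /psi big_split /=.
  apply: lerD.
    rewrite -mulr_suml ler_pdivrMr //.
    apply: le_trans (ler_sum _ (fun j _ => ler_wpM2r (Pd0 j) (hyp1 j))) _.
    rewrite -mulr_sumr.
    apply: le_trans (ler_wpM2l _ trP') _.
      apply: mulr_ge0; last exact: ltW. by rewrite invr_ge0 mulr_ge0 // ltW.
    rewrite le_eqVlt; apply/orP; left; apply/eqP; field; rewrite gt_eqF //.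
  rewrite -mulr_sumr.
  apply: le_trans (ler_wpM2l _ trP') _.
    by apply: mulr_ge0; apply: divr_ge0 => //; exact: ltW.
  rewrite le_eqVlt; apply/orP; left; apply/eqP; rewrite /Z; field; rewrite gt_eqF //.
have E8 : (\sum_j w j * dd 0 j ^+ 2) / (2 * lam) < a ^+ 2 * W / (2 * lam).
  rewrite ltr_pM2r; first exact: F3. by rewrite invr_gt0 mulr_gt0.
have fin1 : lam / 2 * Z / W = 16^-1 by rewrite /lam; field; rewrite !gt_eqF.
have fin2 : a ^+ 2 * W / (2 * lam) = 16^-1 by rewrite a2 /lam; field; rewrite !gt_eqF.
move: E1; rewrite S1 S2 => E1.
rewrite E5 in E4; rewrite fin1 in E7; rewrite fin2 in E8.
lra.
Qed.



Theorem theorem2 (R : realType) :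
  exists C : R, 0 < C /\
  exists c : R -> R, (forall q : R, 2 <= q -> 0 < c q) /\
  forall (N n m : nat) (w : 'I_N -> R) (blk : 'I_N -> 'I_m),
    (0 < n)%N ->
    (forall i, 0 <= w i) ->
    0 < \sum_(i < N) w i ->
    (forall i, w i <= (4 * n%:R)^-1 * \sum_(j < N) w j) ->
    (forall s : 'I_m,
       (\sum_(i < N | blk i == s) w i) / (\sum_(i < N) w i)
         >= C * ln (2 * m%:R) / n%:R) ->
    forall (q h : R) (nX : 'rV[R]_N -> R),
      2 <= q -> 0 < h ->
      is_norm nX ->
      (forall x, Num.max (lqw_norm q w x) (h * linf_norm x) <= nX x) ->
      ((Num.min
         (c q * (n%:R * \big[Num.max/0]_(s < m)
                   ((\sum_(i < N | blk i == s) w i) / (\sum_(i < N) w i)))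
                `^ (- (1 / 2))
              * (\sum_(i < N) w i) `^ (1 / q)) 
         (h / 2))%:E
      <= kolmogorov_width nX (prod_octahedra blk) n)%E.
Proof.
exists 1; split => //.
exists (fun _ => 8^-1); split => [q _|]; first by [].
move=> N n m w blk n0 w0 W0 hyp1 hyp2 q h nX q2 h0 _ HX.
have Ws : forall s : 'I_m, 0 < \sum_(i < N | blk i == s) w i.
  move=> s; have := hyp2 s.
  have m0 : (0 < m)%N := leq_ltn_trans (leq0n _) (ltn_ord s).
  have lnp : 0 < ln (2 * m%:R : R).
    apply: ln_gt0; rewrite -natrM ltr1n mul2n -addnn; exact: (leq_add m0 m0).
  have : 0 < 1 * ln (2 * m%:R : R) / n%:R.
    by rewrite mul1r divr_gt0 // ltr0n.
  move=> H1 H2; have := lt_le_trans H1 H2.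
  by rewrite pmulr_lgt0 // invr_gt0.
rewrite /kolmogorov_width; apply/ereal_infP => _ [Q HQ <-].
have [x Kx Hx] := @core R N n m w blk Q q h nX n0 w0 W0 hyp1 Ws q2 h0 HX HQ.
apply: le_ereal_sup_tmp.
exists (ereal_inf [set (nX (x - y))%:E | y in [set y | y \in Q]]); first by exists x.
apply/ereal_infP => _ [y Hy <-]; rewrite lee_fin; exact: Hx.
Qed.
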